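(* Let $Y$ and $Z$ be finite-dimensional real or complex vector spaces, let $f\colon Y\to Y$ be a vector field, and let $F\colon Y\to Z$ be quadratic. Let $s\ge 1$, let $a_{ij},b_i$ ($i,j=1,\dots,s$) be scalars, let $h>0$, and suppose $y_0,y_1,Y_1,\dots,Y_s\in Y$ satisfy the Runge--Kutta equations \[ Y_i = y_0 + h\sum_{j=1}^s a_{ij} f(Y_j)\quad (i=1,\dots,s),\qquad y_1 = y_0 + h\sum_{i=1}^s b_i f(Y_i). \] Then for each $i=1,\dots,s$, \[ F(Y_i) = F(y_0) + h\sum_{j=1}^s a_{ij} F'(Y_j)f(Y_j) + \frac{h^2}{2}\sum_{j,k=1}^s \bigl(a_{ij}a_{ik} - a_{ij}a_{jk} - a_{ik}a_{kj}\bigr) F''\bigl(f(Y_j),f(Y_k)\bigr), \] and \[ F(y_1) = F(y_0) + h\sum_{i=1}^s b_i F'(Y_i)f(Y_i) + \frac{h^2}{2}\sum_{i,j=1}^s \bigl(b_ib_j - b_ia_{ij} - b_ja_{ji}\bigr) F''\bigl(f(Y_i),f(Y_j)\bigr). \]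
   Context: A map $F\colon Y\to Z$ is quadratic if for every $y_0\in Y$ one has $F(y)=F(y_0)+F'(y_0)(y-y_0)+\tfrac12F''(y-y_0,y-y_0)$ for all $y\in Y$, where $F''$ is a (constant) symmetric bilinear map $Y\times Y\to Z$ and $F'(y_0)$ is the derivative of $F$ at $y_0$. *)

(* Defs.v *)
From HB Require Import structures.
From mathcomp Require Import all_boot all_order all_algebra.
From mathcomp Require Import all_classical all_reals all_analysis.
Set Implicit Arguments. Unset Strict Implicit. Unset Printing Implicit Defensive.
Import Order.TTheory GRing.Theory Num.Theory.
Import numFieldNormedType.Exports.
Local Open Scope ring_scope.

Definition finite_dim (K : numFieldType) (Y : normedModType K) : Prop :=
  exists e : seq Y, forall y : Y,
    exists c : nat -> K, y = \sum_(i < size e) c i *: e`_i.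

(* F : Y -> Z is quadratic with (constant) second derivative F2:
   F2 is a symmetric bilinear map and, for every y0, F is differentiable at
   y0 and F y = F y0 + F'(y0)(y - y0) + 1/2 F2 (y - y0) (y - y0) for all y,
   where F'(y0) = 'd F y0 is the (Frechet) derivative of F at y0. *)
Definition quadratic (K : numFieldType) (Y Z : normedModType K)
    (F : Y -> Z) (F2 : Y -> Y -> Z) : Prop :=
  [/\ (forall u v, F2 u v = F2 v u),
      (forall (a : K) (u v w : Y), F2 (a *: u + v) w = a *: F2 u w + F2 v w) &
      (forall y0 : Y, differentiable F y0 /\
         forall y : Y,
           F y = F y0 + 'd F y0 (y - y0) + 2^-1 *: F2 (y - y0) (y - y0))].

(* Main.v *)
Require Import Defs.
From HB Require Import structures.
From mathcomp Require Import all_boot all_order all_algebra.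
From mathcomp Require Import all_classical all_reals all_analysis.
From mathcomp Require Import ring.
Import Order.TTheory GRing.Theory Num.Theory.
Import numFieldNormedType.Exports.
Local Open Scope ring_scope.
Lemma bil (K : numFieldType) (Y Z : normedModType K) (F : Y -> Z) (F2 : Y -> Y -> Z) :
  quadratic F F2 ->
  [/\ (forall a u w, F2 (a *: u) w = a *: F2 u w),
      (forall u v w, F2 (u + v) w = F2 u w + F2 v w),
      (forall a u w, F2 w (a *: u) = a *: F2 w u),
      (forall u v w, F2 w (u + v) = F2 w u + F2 w v) &
      (forall y0 y v, 'd F y v = 'd F y0 v + F2 (y - y0) v)].
Proof.
move=> [Fsym Flin Fq].
have F20 w0 : F2 0 w0 = 0.
  have H := Flin 1 0 0 w0; rewrite !scale1r addr0 in H.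
  apply: (@addrI _ (F2 0 w0)); by rewrite addr0 -H.
have F2Zl a u w0 : F2 (a *: u) w0 = a *: F2 u w0.
  by rewrite -[a *: u]addr0 Flin F20 addr0.
have F2Dl u v w0 : F2 (u+v) w0 = F2 u w0 + F2 v w0.
  by rewrite -[u]scale1r Flin !scale1r.
have F2Zr a u w0 : F2 w0 (a *: u) = a *: F2 w0 u by rewrite Fsym F2Zl Fsym.
have F2Dr u v w0 : F2 w0 (u + v) = F2 w0 u + F2 w0 v by rewrite Fsym F2Dl !(Fsym w0).
split => // y0 y v.
have [_ q1] := Fq y; have [_ q2] := Fq y0.
have e1 := q1 (y + v); have e2 := q2 (y + v); have e3 := q2 y.
rewrite [y + v - y]addrC addKr in e1.
rewrite [y + v - y0]addrAC in e2.
rewrite e1 e3 in e2; clear e1 e3 q1 q2.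
move: e2; move: (y - y0) => d.
rewrite linearD F2Dl !F2Dr (Fsym v d).
set A := F y0; set B := 'd F y0 d; set C := F2 d d; set Dv := 'd F y0 v;
  set E := F2 d v; set G := F2 v v; set X := 'd F y v.
have -> : 2^-1 *: (C + E + (E + G)) = 2^-1 *: C + E + 2^-1 *: G.
  have h2 : 2^-1 *: (E + E) = E.
    by rewrite -mulr2n -[E *+ 2]scaler_nat scalerA mulVf ?scale1r // pnatr_eq0.
  by rewrite addrA -[C + E + E]addrA scalerDr [2^-1 *: (C + _)]scalerDr h2.
rewrite -!addrA => /addrI /addrI.
rewrite addrCA [2^-1 *: C + (E + _)]addrCA [Dv + (E + _)]addrA.
by move/addIr.
Qed.
Lemma key (K : numFieldType) (Y Z : normedModType K) (F : Y -> Z) (F2 : Y -> Y -> Z)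
  (f : Y -> Y) (s : nat) (M : 'I_s -> 'I_s -> K) (c : 'I_s -> K) (h : K) (y0 : Y)
  (Ys : 'I_s -> Y) (w : Y) :
  quadratic F F2 -> (forall j, Ys j = y0 + h *: \sum_(k < s) M j k *: f (Ys k)) ->
  w = y0 + h *: \sum_(j < s) c j *: f (Ys j) ->
  F w = F y0 + h *: \sum_(j < s) c j *: 'd F (Ys j) (f (Ys j))
  + (h ^+ 2 / 2) *: \sum_(j < s) \sum_(k < s)
      (c j * c k - c j * M j k - c k * M k j) *: F2 (f (Ys j)) (f (Ys k)).
Proof.
move=> qF HY ->.
have [Zl Dl Zr Dr dlink] := @bil _ _ _ _ _ qF.
have [Fsym _ Fq] := qF.
have Suml (g : 'I_s -> Y) w0 : F2 (\sum_j g j) w0 = \sum_j F2 (g j) w0.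
  have F20 : F2 0 w0 = 0 by rewrite -(scale0r (0 : Y)) Zl scale0r.
  exact: (big_morph _ (fun u v => Dl u v w0) F20).
have Sumr (g : 'I_s -> Y) w0 : F2 w0 (\sum_j g j) = \sum_j F2 w0 (g j).
  by rewrite Fsym Suml; apply: eq_bigr => j _; rewrite Fsym.
have dl j : 'd F (Ys j) (f (Ys j)) = 'd F y0 (f (Ys j))
    + h *: \sum_k M j k *: F2 (f (Ys k)) (f (Ys j)).
  rewrite (dlink y0) [X in X - y0]HY [y0 + _ - y0]addrC addKr Zl Suml.
  by congr (_ + _ *: _); apply: eq_bigr => k _; rewrite Zl.
rewrite [F (_ + _)](proj2 (Fq y0)) [y0 + _ - y0]addrC addKr.
under [X in _ = _ + h *: X + _]eq_bigr => j _ do rewrite dl scalerDr.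
have lin : 'd F y0 (\sum_i c i *: f (Ys i)) = \sum_i c i *: 'd F y0 (f (Ys i)).
  by rewrite linear_sum; apply: eq_bigr => i _; rewrite linearZ.
rewrite big_split /= scalerDr linearZ lin.
rewrite -!addrA; congr (_ + (_ + _)).
set T := \sum_(j < s) \sum_(k < s) (c j * M j k) *: F2 (f (Ys j)) (f (Ys k)).
set P := \sum_(j < s) \sum_(k < s) (c j * c k) *: F2 (f (Ys j)) (f (Ys k)).
have e1 : \sum_(j < s) c j *: (h *: \sum_(k < s) M j k *: F2 (f (Ys k)) (f (Ys j))) = h *: T.
  rewrite scaler_sumr; apply: eq_bigr => j _; rewrite !scaler_sumr; apply: eq_bigr => k _.
  by rewrite Fsym !scalerA; congr (_ *: _); ring.
have e2 : F2 (h *: \sum_(j < s) c j *: f (Ys j)) (h *: \sum_(j < s) c j *: f (Ys j)) = h ^+ 2 *: P.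
  rewrite /P Zl Zr scalerA Suml !scaler_sumr; apply: eq_bigr => j _.
  rewrite Zl Sumr !scaler_sumr; apply: eq_bigr => k _.
  by rewrite Zr !scalerA; congr (_ *: _); ring.
have e3 : \sum_(j < s) \sum_(k < s) (c j * c k - c j * M j k - c k * M k j) *: F2 (f (Ys j)) (f (Ys k))
   = P - T - T.
  have e4 : \sum_(j < s) \sum_(k < s) (c k * M k j) *: F2 (f (Ys j)) (f (Ys k)) = T.
    rewrite exchange_big /T; apply: eq_bigr => j _; apply: eq_bigr => k _; by rewrite Fsym.
  rewrite -{2}e4 /P /T -!sumrB; apply: eq_bigr => j _; rewrite -!sumrB; apply: eq_bigr => k _.
  by rewrite !scalerBl.
rewrite e1 e2 e3 !scalerA !scalerBr.
have -> : h * h = h ^+ 2 / 2 + h ^+ 2 / 2.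
  by field.
rewrite (scalerDl T) addrC addrA !subrK.
by rewrite mulrC.
Qed.
Theorem lemma2p1 (K : numFieldType) (Y Z : normedModType K)
  (f : Y -> Y) (F : Y -> Z) (F2 : Y -> Y -> Z) (s : nat)
  (a : 'I_s -> 'I_s -> K) (b : 'I_s -> K) (h : K)
  (y0 y1 : Y) (Ys : 'I_s -> Y) :
  finite_dim Y -> finite_dim Z ->
  quadratic F F2 ->
  (1 <= s)%N -> 0 < h ->
  (forall i, Ys i = y0 + h *: \sum_(j < s) a i j *: f (Ys j)) ->
  y1 = y0 + h *: \sum_(i < s) b i *: f (Ys i) ->
  (forall i, F (Ys i) = F y0 + h *: \sum_(j < s) a i j *: 'd F (Ys j) (f (Ys j))
      + (h ^+ 2 / 2) *: \sum_(j < s) \sum_(k < s)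
          (a i j * a i k - a i j * a j k - a i k * a k j) *: F2 (f (Ys j)) (f (Ys k)))
  /\
  F y1 = F y0 + h *: \sum_(i < s) b i *: 'd F (Ys i) (f (Ys i))
      + (h ^+ 2 / 2) *: \sum_(i < s) \sum_(j < s)
          (b i * b j - b i * a i j - b j * a j i) *: F2 (f (Ys i)) (f (Ys j)).
Proof.
move=> _ _ qF _ _ HY Hy1; split.
  move=> i; have -> := (@key K Y Z F F2 f s a (a i) h y0 Ys (Ys i) qF HY (HY i)).
  by congr (_ + _ *: _ + _ *: _).
have -> := (@key K Y Z F F2 f s a b h y0 Ys y1 qF HY Hy1).
by congr (_ + _ *: _ + _ *: _).
Qed.
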